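(* Let $G_1$ and $G_2$ be finite simple undirected graphs. Then $G_1\cong G_2$ if and only if $\sigma(G_1)=\sigma(G_2)$.
   Context: A clique is a set of pairwise adjacent vertices; a set $S$ of cliques of $G$ is a total clique covering if every vertex lies in some member of $S$ and every edge has both endpoints in some member of $S$; $\theta_t(G)$ is the minimum size of a total clique covering. The code $\sigma(G)$ of a graph $G=(V,E)$ with $|V|=m$ and $s\ge0$ isolated vertices is defined as follows. Let $k=\theta_t(G)-s$. For a total clique covering $S=\{C_1,\ldots,C_{s+k}\}$ with $|S|=\theta_t(G)$, where $C_1,\ldots,C_s$ are the singleton cliques of the isolated vertices, and for each bijective assignment of the first $k$ primes to the cliques $C_{s+1},\ldots,C_{s+k}$, label each vertex $v$ by $1$ if $v$ is isolated and otherwise by the product of the primes assigned to the cliques among $C_{s+1},\ldots,C_{s+k}$ that contain $v$; listing these labels in non-decreasing order gives a sequence in $\mathbb{Z}^m$ (a coding sequence). Let $\sigma[S]$ be the lexicographically least of the (at most $k!$) sequences so obtained. Then $\sigma(G)$ is the lexicographically least element of $\{\sigma[S] : S \text{ a total clique covering of } G \text{ with } |S|=\theta_t(G)\}$. *)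

(* Defs.v *)
From mathcomp Require Import all_boot.
Set Implicit Arguments. Unset Strict Implicit. Unset Printing Implicit Defensive.

(* The (0-indexed) i-th prime: nth_prime 0 = 2, nth_prime 1 = 3, ... *)
Lemma exists_prime_above (p : nat) : exists q, (p < q) && prime q.
Proof. by case: (prime_above p) => q H1 H2; exists q; rewrite H1 H2. Qed.

Definition next_prime (p : nat) : nat := ex_minn (exists_prime_above p).

Definition nth_prime (i : nat) : nat := iter i.+1 next_prime 1.

Fixpoint lexle (s t : seq nat) : bool :=
  match s, t with
  | [::], _ => true
  | _ :: _, [::] => false
  | x :: s', y :: t' => (x < y) || ((x == y) && lexle s' t')
  end.

Definition lexmin (s t : seq nat) : seq nat := if lexle s t then s else t.

Definition lexmin_list (l : seq (seq nat)) : seq nat :=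
  match l with [::] => [::] | c :: cs => foldr lexmin c cs end.

Section Code.
Variables (V : finType) (e : rel V).

Definition clique (C : {set V}) : bool :=
  (C != set0) && [forall x in C, forall y in C, (x != y) ==> e x y].

Definition total_clique_covering (Cv : {set {set V}}) : bool :=
  [&& [forall C in Cv, clique C],
      [forall v, exists C in Cv, v \in C] &
      [forall x, forall y, e x y ==> [exists C in Cv, (x \in C) && (y \in C)]]].

Definition min_total_clique_covering (Cv : {set {set V}}) : bool :=
  total_clique_covering Cv &&
  [forall Cv' : {set {set V}}, total_clique_covering Cv' ==> (#|Cv| <= #|Cv'|)].

Definition isolated (v : V) : bool := [forall u, ~~ e v u].

Definition nonisolated_cliques (Cv : {set {set V}}) : {set {set V}} :=
  [set C in Cv | ~~ [exists v, isolated v && (C == [set v])]].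

(* an ordering s of the k cliques encodes the bijective assignment
   clique (nth set0 s i) |-> nth_prime i *)
Definition vertex_label (s : seq {set V}) (v : V) : nat :=
  if isolated v then 1
  else \prod_(i < size s | v \in nth set0 s i) nth_prime i.

Definition coding_sequence (s : seq {set V}) : seq nat :=
  sort leq [seq vertex_label s v | v <- enum V].

Definition code_of_covering (Cv : {set {set V}}) : seq nat :=
  lexmin_list [seq coding_sequence s | s <- permutations (enum (nonisolated_cliques Cv))].

Definition code : seq nat :=
  lexmin_list [seq code_of_covering Cv
              | Cv <- enum [set Cv : {set {set V}} | min_total_clique_covering Cv]].

End Code.

Definition simple_graph (V : finType) (e : rel V) : Prop :=
  symmetric e /\ irreflexive e.

Definition graph_iso (V1 V2 : finType) (e1 : rel V1) (e2 : rel V2) : Prop :=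
  exists f : V1 -> V2, bijective f /\ forall x y, e2 (f x) (f y) = e1 x y.

(* Main.v *)
Require Import Defs.
From mathcomp Require Import all_boot.
Set Implicit Arguments. Unset Strict Implicit. Unset Printing Implicit Defensive.

Lemma next_primeP p : p < next_prime p /\ prime (next_prime p).
Proof. rewrite /next_prime; case: ex_minnP => q /andP[H1 H2] _; by split. Qed.

Lemma nth_prime_prime i : prime (nth_prime i).
Proof. exact: (proj2 (next_primeP (iter i next_prime 1))). Qed.

Lemma nth_prime_lt i : nth_prime i < nth_prime i.+1.
Proof. exact: (proj1 (next_primeP (iter i.+1 next_prime 1))). Qed.
Opaque nth_prime next_prime.
Lemma mono : {homo nth_prime : i j / i < j}.
Proof.
  apply: homo_ltn; last exact: nth_prime_lt. move=> x y z; exact: ltn_trans.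
Qed.
Lemma nth_prime_inj : injective nth_prime.
Proof.
move=> i j Hij. have [H|H|H] := ltngtP i j.
- by have := mono H; rewrite Hij ltnn.
- by have := mono H; rewrite Hij ltnn.
- exact: H.
Qed.
Definition PP n (A : pred 'I_n) := \prod_(i < n | A i) nth_prime i.

Lemma PP_gt0 n A : 0 < @PP n A.
Proof. apply: prodn_gt0 => i; exact: prime_gt0 (nth_prime_prime i). Qed.

Lemma PP_dvd n (A : pred 'I_n) p : prime p -> p %| PP A -> exists2 i, A i & p = nth_prime i.
Proof.
move=> pp; rewrite /PP (Euclid_dvd_prod _ _ _ pp).
elim/big_rec: _ => // i b Ai IH /orP[|/IH//].
rewrite (dvdn_prime2 pp (nth_prime_prime i)) => /eqP E; by exists i.
Qed.

Lemma PP_gcd n (A B : pred 'I_n) : (1 < gcdn (PP A) (PP B)) = [exists i, A i && B i].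
Proof.
apply/idP/existsP.
  move=> /pdivP [p pp]; rewrite dvdn_gcd => /andP[HA HB].
  have [i Ai Ei] := PP_dvd pp HA.
  have [j Bj Ej] := PP_dvd pp HB.
  have Hij : i = j by apply/val_inj/nth_prime_inj; rewrite -Ei -Ej.
  by exists i; rewrite Ai Hij Bj.
move=> [i /andP[Ai Bi]].
have pg := prime_gt1 (nth_prime_prime i).
apply: leq_trans pg _; apply: dvdn_leq; first by rewrite gcdn_gt0 PP_gt0.
by rewrite dvdn_gcd /PP !(bigD1 i Ai, bigD1 i Bi) /= !dvdn_mulr.
Qed.

Lemma lexle_refl s : lexle s s.
Proof. by elim: s => //= x s ->; rewrite eqxx orbT. Qed.

Lemma lexle_total s t : lexle s t || lexle t s.
Proof.
elim: s t => [|x s IH] [|y t] //=.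
case: (ltngtP x y) => //= <-; by rewrite eqxx IH.
Qed.

Lemma lexle_anti s t : lexle s t -> lexle t s -> s = t.
Proof.
elim: s t => [|x s IH] [|y t] //=.
case: (ltngtP x y) => //= <- /= H1 H2; by rewrite (IH t H1 H2).
Qed.

Lemma lexle_trans s t u : lexle s t -> lexle t u -> lexle s u.
Proof.
elim: s t u => [|x s IH] [|y t] [|z u] //=.
case: (ltngtP x y) => //= [xy|<-] /=.
  case: (ltngtP y z) => //= [yz|<-] _ _; first by rewrite (ltn_trans xy yz).
  by rewrite xy.
case: (ltngtP x z) => //= _ H1 H2; exact: IH H1 H2.
Qed.

Lemma foldr_lexminP c cs :
  foldr lexmin c cs \in c :: cs /\ forall x, x \in c :: cs -> lexle (foldr lexmin c cs) x.
Proof.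
elim: cs => [|d cs [IH1 IH2]] /=.
  by split; [rewrite inE | move=> x; rewrite inE => /eqP ->; exact: lexle_refl].
set m := foldr lexmin c cs in IH1 IH2 *.
have sub : forall x, x \in c :: cs -> x \in c :: d :: cs.
  by move=> x; rewrite !inE => /orP[->|->]; rewrite ?orbT.
rewrite /lexmin; case: ifP => H.
  split; first by rewrite !inE eqxx orbT.
  move=> x; rewrite !inE => /or3P[/eqP->|/eqP->|xin].
  - exact: lexle_trans H (IH2 _ (mem_head _ _)).
  - exact: lexle_refl.
  - have xin' : x \in c :: cs by rewrite inE xin orbT.
    exact: lexle_trans H (IH2 _ xin').
split; first exact: sub.
move=> x; rewrite !inE => /or3P[/eqP->|/eqP->|xin].
- exact: IH2 (mem_head _ _).
- by have := lexle_total d m; rewrite H.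
- have xin' : x \in c :: cs by rewrite inE xin orbT.
  exact: IH2 _ xin'.
Qed.

Lemma lexmin_list_eq l1 l2 : l1 =i l2 -> lexmin_list l1 = lexmin_list l2.
Proof.
case: l1 => [|c1 cs1]; case: l2 => [|c2 cs2] //= E.
- by have := E c2; rewrite mem_head.
- by have := E c1; rewrite mem_head.
have [A1 B1] := foldr_lexminP c1 cs1.
have [A2 B2] := foldr_lexminP c2 cs2.
apply: lexle_anti; first by apply: B1; rewrite E.
by apply: B2; rewrite -E.
Qed.

Section Dir2.
Variables (V : finType) (e : rel V).
Hypotheses (esym : symmetric e) (eirr : irreflexive e).

Lemma label_rel Cv s : total_clique_covering e Cv ->
  perm_eq s (enum (nonisolated_cliques e Cv)) ->
  forall u v, e u v = (u != v) && (1 < gcdn (vertex_label e s u) (vertex_label e s v)).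
Proof.
move=> /and3P[/forallP Hcl /forallP Hcov /forallP Hedge] Hs u v.
rewrite /vertex_label.
case Iu: (isolated e u).
  rewrite gcd1n andbF. by move: Iu => /forallP /(_ v) /negbTE.
case Iv: (isolated e v).
  rewrite gcdn1 andbF esym. by move: Iv => /forallP /(_ u) /negbTE.
rewrite (PP_gcd (fun i : 'I_(size s) => u \in nth set0 s i) (fun i : 'I_(size s) => v \in nth set0 s i)).
case: (eqVneq u v) => [->|uv]; first by rewrite eirr.
rewrite /=; apply/idP/existsP.
  move=> euv; have /existsP [C /andP [CCv /andP[uC vC]]] := implyP (forallP (Hedge u) v) euv.
  have Cs : C \in s.
    rewrite (perm_mem Hs) mem_enum inE CCv /=; apply/negP => /existsP [w /andP[_ /eqP Cw]].
    by move: uC vC uv; rewrite Cw !inE => /eqP -> /eqP ->; rewrite eqxx.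
  have Hi : index C s < size s by rewrite index_mem.
  by exists (Ordinal Hi) => /=; rewrite nth_index // uC vC.
move=> [i /andP[ui vi]].
have : nth set0 s i \in s by rewrite mem_nth.
rewrite (perm_mem Hs) mem_enum inE => /andP [CCv _].
have /andP [_ /forallP Hc] := implyP (Hcl _) CCv.
have := implyP (forallP (implyP (Hc u) ui) v) vi.
by rewrite uv.
Qed.
End Dir2.

Lemma lexmin_list_mem l : l != [::] -> lexmin_list l \in l.
Proof. case: l => // c cs _; exact: (foldr_lexminP c cs).1. Qed.

Lemma lexmin_list_in l x : x \in l -> lexmin_list l \in l.
Proof. by case: l => // c cs _; exact: (foldr_lexminP c cs).1. Qed.

Section Exist.
Variables (V : finType) (e : rel V).
Hypotheses (esym : symmetric e) (eirr : irreflexive e).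

Lemma tcc_exists : total_clique_covering e [set C | clique e C].
Proof.
apply/and3P; split.
- by apply/forallP => C; apply/implyP; rewrite inE.
- apply/forallP => v; apply/existsP; exists [set v]; rewrite !inE eqxx andbT.
  rewrite /clique; apply/andP; split; first by apply/negP => /eqP E; move: (set11 v); rewrite E inE.
  apply/forallP => x; apply/implyP; rewrite inE => /eqP ->.
  apply/forallP => y; apply/implyP; rewrite inE => /eqP ->; by rewrite eqxx.
- apply/forallP => x; apply/forallP => y; apply/implyP => exy.
  apply/existsP; exists [set x; y]; rewrite !inE !eqxx orbT /= andbT.
  rewrite /clique; apply/andP; split; first by apply/negP => /eqP E; move: (set21 x y); rewrite E inE.
  apply/forallP => a; apply/implyP; rewrite !inE => /orP[]/eqP->;
  apply/forallP => b; apply/implyP; rewrite !inE => /orP[]/eqP->;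
  by rewrite ?eqxx ?exy ?implybT // esym exy implybT.
Qed.

Lemma min_exists : exists Cv, min_total_clique_covering e Cv.
Proof.
case: (@arg_minnP _ _ (total_clique_covering e) (fun Cv : {set {set V}} => #|Cv|) tcc_exists) => Cv H1 H2.
exists Cv; rewrite /min_total_clique_covering H1 /=.
by apply/forallP => Cv'; apply/implyP => /H2.
Qed.

Lemma code_spec : exists Cv s, [/\ total_clique_covering e Cv,
  perm_eq s (enum (nonisolated_cliques e Cv)) & code e = coding_sequence e s].
Proof.
have [Cv0 H0] := min_exists.
set L := [seq code_of_covering e Cv | Cv <- enum [set Cv | min_total_clique_covering e Cv]].
have Hin : code_of_covering e Cv0 \in L by apply/mapP; exists Cv0; rewrite // mem_enum inE.
have : code e \in L.
  exact: lexmin_list_in Hin.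
move=> /mapP [Cv]; rewrite mem_enum inE => /andP [Htcc _] ->.
set N := enum (nonisolated_cliques e Cv).
have : code_of_covering e Cv \in [seq coding_sequence e s | s <- permutations N].
  have Hin2 : coding_sequence e N \in [seq coding_sequence e s | s <- permutations N].
    by apply/mapP; exists N; rewrite // mem_permutations.
  exact: lexmin_list_in Hin2.
move=> /mapP [s]; rewrite mem_permutations => Hs ->.
by exists Cv, s.
Qed.
End Exist.

Lemma iso_of_labels (V W : finType) (eV : rel V) (eW : rel W) (L : V -> nat) (M : W -> nat)
  (R : nat -> nat -> bool) :
  (forall u v, eV u v = (u != v) && R (L u) (L v)) ->
  (forall u v, eW u v = (u != v) && R (M u) (M v)) ->
  perm_eq (map M (enum W)) (map L (enum V)) -> graph_iso eW eV.
Proof.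
move=> HV HW Hp.
have cardE' : #|W| = #|V| by rewrite !cardE -(size_map M) (perm_size Hp) size_map.
case: (pickP (fun _ : V => true)) => [x0 _ | V0]; last first.
  have W0 : forall w : W, False.
    move=> w; have : 0 < #|W| by apply/card_gt0P; exists w.
    by rewrite cardE' => /card_gt0P [v _]; have := V0 v.
  have V0' : forall v : V, False by move=> v; have := V0 v.
  exists (fun w => match W0 w with end); split.
    by exists (fun v => match V0' v with end) => [w|v]; [case: (W0 w) | case: (V0' v)].
  by move=> x; case: (W0 x).
case/(perm_iotaP 0): Hp => Is HIs Emap.
set a := enum V in HIs Emap *; set b := enum W in Emap *.
have sIs : size Is = #|W| by rewrite -(size_map (nth 0 (map L a))) -Emap size_map cardE.
have uIs : uniq Is by rewrite (perm_uniq HIs) iota_uniq.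
have Iw : forall w, index w b < size Is by move=> w; rewrite sIs cardE index_mem mem_enum.
have Ilt : forall k, k < size Is -> nth 0 Is k < size a.
  move=> k Hk; have : nth 0 Is k \in iota 0 (size (map L a)) by rewrite -(perm_mem HIs) mem_nth.
  by rewrite mem_iota size_map.
pose h w := nth x0 a (nth 0 Is (index w b)).
have Lh : forall w, L (h w) = M w.
  move=> w; rewrite /h -(nth_map x0 0 L (Ilt _ (Iw w))).
  rewrite -(nth_map 0 0 (nth 0 (map L a)) (Iw w)) -Emap (nth_map w) ?nth_index //.
    by rewrite mem_enum.
  by rewrite index_mem mem_enum.
have hinj : injective h.
  move=> w1 w2; rewrite /h => /eqP; rewrite nth_uniq ?Ilt ?enum_uniq // => /eqP.
  move/eqP; rewrite nth_uniq // => /eqP E.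
  by rewrite -(nth_index w1 (mem_enum _ w1 : w1 \in b)) E nth_index ?mem_enum.
exists h; split; first by apply: inj_card_bij hinj _; rewrite cardE'.
by move=> x y; rewrite HV HW (inj_eq hinj) !Lh.
Qed.

Lemma dir2 (V1 V2 : finType) (e1 : rel V1) (e2 : rel V2) :
  simple_graph e1 -> simple_graph e2 -> code e1 = code e2 -> graph_iso e1 e2.
Proof.
move=> [s1 i1] [s2 i2] Ec.
have [Cv1 [t1 [T1 P1 C1]]] := code_spec s1.
have [Cv2 [t2 [T2 P2 C2]]] := code_spec s2.
apply: (@iso_of_labels V2 V1 e2 e1 (vertex_label e2 t2) (vertex_label e1 t1)
          (fun a b => 1 < gcdn a b)).
- move=> u v; exact: (label_rel s2 i2 T2 P2 u v).
- move=> u v; exact: (label_rel s1 i1 T1 P1 u v).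
- move: Ec; rewrite C1 C2 /coding_sequence => E.
  by apply/(perm_sortP leq_total leq_trans anti_leq).
Qed.

Section IsoA.
Variables (V1 V2 : finType) (e1 : rel V1) (e2 : rel V2) (f : V1 -> V2) (g : V2 -> V1).
Hypotheses (fg : cancel f g) (gf : cancel g f) (hf : forall x y, e2 (f x) (f y) = e1 x y).

Let finj : injective f := can_inj fg.

Definition FF (Cv : {set {set V1}}) : {set {set V2}} := [set f @: C | C : {set V1} in Cv].

Lemma GF (C : {set V1}) : g @: (f @: C) = C.
Proof.
apply/setP => x; apply/imsetP/idP => [[y /imsetP [z zC ->] ->]|xC]; first by rewrite fg.
by exists (f x); rewrite ?fg // imset_f.
Qed.

Lemma Finj : injective (fun C : {set V1} => f @: C).
Proof. move=> C1 C2 /= E; by rewrite -(GF C1) E GF. Qed.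

Lemma iso_isolated v : isolated e2 (f v) = isolated e1 v.
Proof.
apply/forallP/forallP => H u.
  by have := H (f u); rewrite hf.
by rewrite -(gf u) hf.
Qed.

Lemma clique_F C : clique e1 C -> clique e2 (f @: C).
Proof.
move=> /andP [C0 /forallP Hc]; apply/andP; split; first by rewrite imset_eq0.
apply/forallP => x'; apply/implyP => /imsetP [x xC ->].
apply/forallP => y'; apply/implyP => /imsetP [y yC ->].
by rewrite (inj_eq finj) hf; exact: implyP (forallP (implyP (Hc x) xC) y) yC.
Qed.

Lemma tcc_F Cv : total_clique_covering e1 Cv -> total_clique_covering e2 (FF Cv).
Proof.
move=> /and3P [/forallP Hcl /forallP Hcov /forallP Hedge]; apply/and3P; split.
- apply/forallP => C'; apply/implyP => /imsetP [C CCv ->]; apply: clique_F.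
  exact: implyP (Hcl C) CCv.
- apply/forallP => v'; have /existsP [C /andP[CCv vC]] := Hcov (g v').
  apply/existsP; exists (f @: C); rewrite imset_f //=.
  by rewrite -{1}(gf v') imset_f.
- apply/forallP => x'; apply/forallP => y'; apply/implyP => exy.
  have : e1 (g x') (g y') by rewrite -hf !gf.
  move/(implyP (forallP (Hedge (g x')) (g y'))) => /existsP [C /andP[CCv /andP [xC yC]]].
  apply/existsP; exists (f @: C); rewrite imset_f //=.
  by rewrite -{1}(gf x') -{1}(gf y') !imset_f.
Qed.

Lemma exiso_F (C : {set V1}) :
  [exists w', isolated e2 w' && (f @: C == [set w'])] = [exists w, isolated e1 w && (C == [set w])].
Proof.
apply/existsP/existsP => [[w' /andP [Iw /eqP E]] | [w /andP [Iw /eqP E]]].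
  exists (g w'); rewrite -iso_isolated gf Iw /=.
  by apply/eqP; apply: Finj; rewrite /= E imset_set1 gf.
exists (f w); rewrite iso_isolated Iw /= E imset_set1 //.
Qed.

Lemma noniso_F Cv : nonisolated_cliques e2 (FF Cv) = FF (nonisolated_cliques e1 Cv).
Proof.
apply/setP => C'; rewrite /nonisolated_cliques inE; apply/andP/imsetP.
  move=> [/imsetP [C CCv ->] Hn]; exists C => //; rewrite inE CCv /= -exiso_F //.
move=> [C]; rewrite inE => /andP [CCv Hn] ->; split; first exact: imset_f.
by rewrite exiso_F.
Qed.

Lemma label_F (s : seq {set V1}) v :
  vertex_label e2 (map (fun C : {set V1} => f @: C) s) (f v) = vertex_label e1 s v.
Proof.
rewrite /vertex_label iso_isolated; case: ifP => // _.
rewrite size_map; apply: eq_bigl => i.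
by rewrite (nth_map set0) // mem_imset.
Qed.

Lemma perm_enum_map : perm_eq (map f (enum V1)) (enum V2).
Proof.
apply: uniq_perm; first by rewrite (map_inj_uniq finj) enum_uniq.
  exact: enum_uniq.
move=> x; rewrite mem_enum; apply/mapP; exists (g x); rewrite ?mem_enum //.
Qed.

Lemma coding_F (s : seq {set V1}) : coding_sequence e2 (map (fun C : {set V1} => f @: C) s) = coding_sequence e1 s.
Proof.
rewrite /coding_sequence; apply/(perm_sortP leq_total leq_trans anti_leq).
rewrite perm_sym -(eq_map (label_F s)) map_comp perm_map //.
exact: perm_enum_map.
Qed.

Lemma perm_enum_FF (A : {set {set V1}}) :
  perm_eq (map (fun C : {set V1} => f @: C) (enum A)) (enum (FF A)).
Proof.
apply: uniq_perm; rewrite ?map_inj_uniq ?enum_uniq //; first exact: Finj.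
move=> C'; rewrite mem_enum; apply/mapP/imsetP => [[C] | [C]]; rewrite ?mem_enum => CA ->;
  by exists C; rewrite ?mem_enum.
Qed.

Lemma coc_sub Cv x :
  x \in [seq coding_sequence e1 s | s <- permutations (enum (nonisolated_cliques e1 Cv))] ->
  x \in [seq coding_sequence e2 s | s <- permutations (enum (nonisolated_cliques e2 (FF Cv)))].
Proof.
move=> /mapP [s]; rewrite mem_permutations => Hs ->.
apply/mapP; exists (map (fun C : {set V1} => f @: C) s); last by rewrite coding_F.
rewrite mem_permutations noniso_F.
exact: perm_trans (perm_map _ Hs) (perm_enum_FF _).
Qed.
End IsoA.

Section IsoB.
Variables (V1 V2 : finType) (e1 : rel V1) (e2 : rel V2) (f : V1 -> V2) (g : V2 -> V1).
Hypotheses (fg : cancel f g) (gf : cancel g f) (hf : forall x y, e2 (f x) (f y) = e1 x y).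

Let hg : forall x y, e1 (g x) (g y) = e2 x y.
Proof. by move=> x y; rewrite -hf !gf. Qed.

Lemma FFK Cv : FF g (FF f Cv) = Cv.
Proof.
apply/setP => C; apply/imsetP/idP => [[C' /imsetP [C'' HC ->] ->]|HC].
  by rewrite (GF fg).
by exists (f @: C); rewrite ?(GF fg) // imset_f.
Qed.

Lemma coc_F Cv : code_of_covering e2 (FF f Cv) = code_of_covering e1 Cv.
Proof.
apply: lexmin_list_eq => x; apply/idP/idP => H.
  by have := @coc_sub _ _ e2 e1 g f gf fg hg (FF f Cv) x H; rewrite FFK.
move: H; exact: (@coc_sub _ _ e1 e2 f g fg gf hf Cv x).
Qed.

Lemma min_F Cv : min_total_clique_covering e1 Cv -> min_total_clique_covering e2 (FF f Cv).
Proof.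
move=> /andP [T /forallP M]; apply/andP; split; first exact: (@tcc_F _ _ e1 e2 f g fg gf hf Cv T).
apply/forallP => Cv'; apply/implyP => T'.
have := implyP (M (FF g Cv')) (@tcc_F _ _ e2 e1 g f gf fg hg Cv' T').
by rewrite /FF !card_imset //; [exact: (@Finj _ _ f g fg) | exact: (@Finj _ _ g f gf)].
Qed.

Lemma code_sub x :
  x \in [seq code_of_covering e1 Cv | Cv <- enum [set Cv | min_total_clique_covering e1 Cv]] ->
  x \in [seq code_of_covering e2 Cv | Cv <- enum [set Cv | min_total_clique_covering e2 Cv]].
Proof.
move=> /mapP [Cv]; rewrite mem_enum inE => HM ->.
apply/mapP; exists (FF f Cv); last by rewrite coc_F.
by rewrite mem_enum inE min_F.
Qed.
End IsoB.

Lemma dir1 (V1 V2 : finType) (e1 : rel V1) (e2 : rel V2) :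
  graph_iso e1 e2 -> code e1 = code e2.
Proof.
move=> [f [[g fg gf] hf]].
have hg : forall x y, e1 (g x) (g y) = e2 x y by move=> x y; rewrite -hf !gf.
apply: lexmin_list_eq => x; apply/idP/idP.
  exact: (@code_sub _ _ e1 e2 f g fg gf hf x).
exact: (@code_sub _ _ e2 e1 g f gf fg hg x).
Qed.

Theorem theorem3 (V1 V2 : finType) (e1 : rel V1) (e2 : rel V2) :
  simple_graph e1 -> simple_graph e2 ->
  (graph_iso e1 e2 <-> code e1 = code e2).
Proof.
move=> H1 H2; split; first exact: dir1.
exact: dir2.
Qed.
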